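(* Let $0<R<1$ and let $f$ be a circular tractrix with parameter $R$ and constants $c_1^2-c_2^2=1$. Then $f$ is closed, i.e. there exists $P>0$ with $f(t+P)=f(t)$ for all $t\in\mathbb R$, if and only if $\sqrt{1-R^2}\in\mathbb Q$.
   Context: Fix $0<R<1$, $\lambda=\frac{\sqrt{1-R^2}}{R}$, and real constants $c_1,c_2$ with $c_1^2-c_2^2=1$. The circular tractrix is $f(t)=\big(\xi_1\cos\tfrac tR+\xi_2\sin\tfrac tR,\ -\xi_2\cos\tfrac tR+\xi_1\sin\tfrac tR,\ \xi_3\big)$, $t\in\mathbb R$, with $\xi_1=\frac{(R-\frac1R)\cos\lambda t}{\frac{c_1}{R}+\cos\lambda t}$, $\xi_2=-\frac{\lambda\sin\lambda t}{\frac{c_1}{R}+\cos\lambda t}$, $\xi_3=\frac{\lambda c_2}{\frac{c_1}{R}+\cos\lambda t}$. *)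

(* Defs.v *)
From Stdlib Require Import Reals QArith Qreals.
Open Scope R_scope.

Definition lam (Rr : R) : R := sqrt (1 - Rr ^ 2) / Rr.

Definition xi1 (Rr c1 t : R) : R :=
  ((Rr - 1 / Rr) * cos (lam Rr * t)) / (c1 / Rr + cos (lam Rr * t)).
Definition xi2 (Rr c1 t : R) : R :=
  - (lam Rr * sin (lam Rr * t)) / (c1 / Rr + cos (lam Rr * t)).
Definition xi3 (Rr c1 c2 t : R) : R :=
  (lam Rr * c2) / (c1 / Rr + cos (lam Rr * t)).

Definition tractrix (Rr c1 c2 t : R) : R * R * R :=
  ( xi1 Rr c1 t * cos (t / Rr) + xi2 Rr c1 t * sin (t / Rr),
    - xi2 Rr c1 t * cos (t / Rr) + xi1 Rr c1 t * sin (t / Rr),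
    xi3 Rr c1 c2 t ).

(* Main.v *)
Require Import Defs.
From Stdlib Require Import Reals QArith Qreals Lra Psatz.
Open Scope R_scope.

Lemma cos_2kpi (x : R) (k : Z) : cos (x + 2 * (IZR k * PI)) = cos x.
Proof.
  rewrite cos_plus, cos_2a_sin, sin_2a.
  rewrite (sin_eq_0_1 (IZR k * PI)) by (exists k; reflexivity). ring.
Qed.

Lemma sin_2kpi (x : R) (k : Z) : sin (x + 2 * (IZR k * PI)) = sin x.
Proof.
  rewrite sin_plus, cos_2a_sin, sin_2a.
  rewrite (sin_eq_0_1 (IZR k * PI)) by (exists k; reflexivity). ring.
Qed.

Lemma cos_eq1 (x : R) : cos x = 1 -> exists k : Z, x = 2 * (IZR k * PI).
Proof.
  intro H.
  assert (H2 : cos (2 * (x / 2)) = 1) by (replace (2 * (x/2)) with x by field; exact H).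
  rewrite cos_2a_sin in H2.
  assert (Hs : sin (x / 2) = 0) by nra.
  destruct (sin_eq_0_0 _ Hs) as [k Hk]. exists k. lra.
Qed.

Lemma sin_of_cos1 (x : R) : cos x = 1 -> sin x = 0.
Proof. intro H. pose proof (sin2_cos2 x). unfold Rsqr in *. rewrite H in *. nra. Qed.

Theorem mainTheorem13 (Rr c1 c2 : R) :
  0 < Rr -> Rr < 1 -> c1 ^ 2 - c2 ^ 2 = 1 ->
  ((exists P : R, 0 < P /\ forall t : R, tractrix Rr c1 c2 (t + P) = tractrix Rr c1 c2 t)
   <-> exists q : Q, Q2R q = sqrt (1 - Rr ^ 2)).
Proof.
  intros Hr0 Hr1 Hc.
  set (w := sqrt (1 - Rr ^ 2)).
  assert (Hw2 : w * w = 1 - Rr ^ 2) by (apply sqrt_sqrt; nra).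
  assert (Hw0 : 0 < w) by (apply sqrt_lt_R0; nra).
  assert (Hlam : lam Rr = w / Rr) by reflexivity.
  split.
  - intros [P [HP H]].
    specialize (H 0). unfold tractrix, xi1, xi2, xi3 in H.
    rewrite Rplus_0_l, Rmult_0_r, cos_0, sin_0, Rdiv_0_l, cos_0, sin_0 in H.
    remember (cos (lam Rr * P)) as u eqn:Hu.
    remember (sin (lam Rr * P)) as s eqn:Hs.
    remember (cos (P / Rr)) as C eqn:HC.
    remember (sin (P / Rr)) as S eqn:HS.
    injection H as E1 E2 E3.
    assert (Hu1 : -1 <= u <= 1) by (subst u; apply COS_bound).
    assert (Hsu : s * s = 1 - u * u) by (subst s u; pose proof (sin2_cos2 (lam Rr * P)); unfold Rsqr in *; lra).
    assert (HCS : C * C + S * S = 1) by (subst C S; pose proof (sin2_cos2 (P / Rr)); unfold Rsqr in *; lra).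
    assert (HD : c1 + Rr * u <> 0) by (intro; nra).
    assert (HE : c1 + Rr <> 0) by (intro; nra).
    assert (HD' : c1 / Rr + u <> 0).
    { intro Hz. apply HD. replace (c1 + Rr * u) with (Rr * (c1 / Rr + u)) by (field; lra). rewrite Hz; ring. }
    assert (HE' : c1 / Rr + 1 <> 0).
    { intro Hz. apply HE. replace (c1 + Rr) with (Rr * (c1 / Rr + 1)) by (field; lra). rewrite Hz; ring. }
    set (X := (Rr - 1 / Rr) * u / (c1 / Rr + u)) in *.
    set (Y := - (lam Rr * s) / (c1 / Rr + u)) in *.
    set (x0 := (Rr - 1 / Rr) * 1 / (c1 / Rr + 1)) in *.
    assert (E1' : X * C + Y * S = x0) by (rewrite E1; ring).
    assert (E2' : - Y * C + X * S = 0) by (rewrite E2, Rmult_0_r, Ropp_0, Rdiv_0_l; ring).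
    assert (Hrw : Rr - 1 / Rr = - (w * w) / Rr) by (rewrite Hw2; field; lra).
    assert (HX : X * (c1 + Rr * u) = - (w * w) * u).
    { unfold X. rewrite Hrw. field. repeat split; try lra; auto. }
    assert (HY : Y * (c1 + Rr * u) = - (w * s)).
    { unfold Y. rewrite Hlam. field. repeat split; try lra; auto. }
    assert (Hx0 : x0 * (c1 + Rr) = - (w * w)).
    { unfold x0. rewrite Hrw. field. repeat split; try lra; auto. }
    assert (Hu_1 : u = 1).
    { destruct (Req_dec c2 0) as [Hc2|Hc2].
      - assert (key : X * X + Y * Y = x0 * x0).
        { transitivity ((X * X + Y * Y) * (C * C + S * S)); [rewrite HCS; ring|].
          transitivity ((X * C + Y * S) ^ 2 + (- Y * C + X * S) ^ 2); [ring|].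
          rewrite E1', E2'. ring. }
        assert (key2 : (X * (c1 + Rr * u)) ^ 2 * (c1 + Rr) ^ 2 + (Y * (c1 + Rr * u)) ^ 2 * (c1 + Rr) ^ 2
                       = (x0 * (c1 + Rr)) ^ 2 * (c1 + Rr * u) ^ 2).
        { transitivity ((X * X + Y * Y) * (c1 + Rr * u) ^ 2 * (c1 + Rr) ^ 2); [ring|].
          rewrite key. ring. }
        rewrite HX, HY, Hx0 in key2.
        assert (key3 : (w * w) * (u * u) * (c1 + Rr) ^ 2 + (s * s) * (c1 + Rr) ^ 2
                       = (w * w) * (c1 + Rr * u) ^ 2).
        { apply (Rmult_eq_reg_l (w * w)); [|nra].
          transitivity ((- (w * w) * u) ^ 2 * (c1 + Rr) ^ 2 + (- (w * s)) ^ 2 * (c1 + Rr) ^ 2); [ring|].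
          rewrite key2. ring. }
        rewrite Hw2, Hsu in key3.
        assert (Hc1 : (c1 - 1) * (c1 + 1) = 0) by (rewrite Hc2 in Hc; lra).
        apply Rmult_integral in Hc1. destruct Hc1 as [Hc1|Hc1].
        + assert (c1 = 1) by lra. subst c1.
          assert (Z : (1 - u) * (2 * Rr * (1 + Rr) * (1 + Rr * u)) = 0).
          { transitivity (((1 - Rr ^ 2) * (u * u) * (1 + Rr) ^ 2 + (1 - u * u) * (1 + Rr) ^ 2)
                           - (1 - Rr ^ 2) * (1 + Rr * u) ^ 2); [ring|]. lra. }
          apply Rmult_integral in Z. destruct Z as [Z|Z]; [lra|].
          exfalso. assert (0 < 2 * Rr * (1 + Rr) * (1 + Rr * u)); [|lra].
          assert (0 < 1 + Rr * u) by nra. apply Rmult_lt_0_compat; [|lra]. nra.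
        + assert (c1 = -1) by lra. subst c1.
          assert (Z : (1 - u) * (-2 * Rr * (1 - Rr) * (1 - Rr * u)) = 0).
          { transitivity (((1 - Rr ^ 2) * (u * u) * (-1 + Rr) ^ 2 + (1 - u * u) * (-1 + Rr) ^ 2)
                           - (1 - Rr ^ 2) * (-1 + Rr * u) ^ 2); [ring|]. lra. }
          apply Rmult_integral in Z. destruct Z as [Z|Z]; [lra|].
          exfalso. assert (0 < 2 * Rr * (1 - Rr) * (1 - Rr * u)); [|lra].
          assert (0 < 1 - Rr * u) by nra. apply Rmult_lt_0_compat; [|lra]. nra.
      - assert (Hl : lam Rr * c2 <> 0).
        { rewrite Hlam. apply Rmult_integral_contrapositive. split; [|auto].
          apply Rmult_integral_contrapositive. split; [lra|]. apply Rinv_neq_0_compat. lra. }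
        unfold Rdiv in E3. apply Rmult_eq_reg_l in E3; [|auto].
        apply Rinv_eq_reg in E3. lra. }
    destruct (cos_eq1 (lam Rr * P)) as [n Hn]; [rewrite <- Hu; exact Hu_1|].
    assert (Hs0 : s = 0) by (rewrite Hs; apply sin_of_cos1; rewrite <- Hu; exact Hu_1).
    rewrite Hu_1, Hs0 in HY. rewrite Hu_1 in HX.
    assert (HY0 : Y = 0).
    { assert (Hz : Y * (c1 + Rr * 1) = 0) by (rewrite HY; ring).
      apply Rmult_integral in Hz. destruct Hz as [Hz|Hz]; [exact Hz|]. exfalso. apply HE. lra. }
    assert (HXx : X = x0).
    { apply (Rmult_eq_reg_r (c1 + Rr)); [|exact HE]. rewrite Hx0. replace (c1 + Rr) with (c1 + Rr * 1) by ring. rewrite HX. ring. }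
    rewrite HY0, HXx in E1'.
    assert (Hx0n : x0 <> 0).
    { intro Hz. rewrite Hz in Hx0. nra. }
    assert (HC1 : C = 1).
    { apply (Rmult_eq_reg_l x0); [|exact Hx0n]. lra. }
    destruct (cos_eq1 (P / Rr)) as [m Hm]; [rewrite <- HC; exact HC1|].
    pose proof PI_RGT_0 as Hpi.
    assert (Hm0 : (0 < m)%Z).
    { apply lt_0_IZR. assert (0 < P / Rr) by (apply Rdiv_lt_0_compat; lra). nra. }
    assert (HPe : P = Rr * (2 * (IZR m * PI))) by (rewrite <- Hm; field; lra).
    rewrite HPe, Hlam in Hn.
    assert (Hnm : IZR n = w * IZR m).
    { apply (Rmult_eq_reg_l (2 * PI)); [|lra].
      transitivity (2 * (IZR n * PI)); [ring|]. rewrite <- Hn. field. lra. }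
    exists (n # Z.to_pos m). unfold Q2R. simpl. rewrite Z2Pos.id by exact Hm0.
    rewrite Hnm. field. apply not_0_IZR. lia.
  - intros [[n d] Hq]. unfold Q2R in Hq. simpl in Hq.
    assert (Hd : 0 < IZR (Z.pos d)) by (apply IZR_lt; lia).
    exists (2 * (IZR (Z.pos d) * PI) * Rr). split.
    + pose proof PI_RGT_0. apply Rmult_lt_0_compat; [|lra]. nra.
    + intro t. unfold tractrix, xi1, xi2, xi3.
      replace ((t + 2 * (IZR (Z.pos d) * PI) * Rr) / Rr) with (t / Rr + 2 * (IZR (Z.pos d) * PI)) by (field; lra).
      replace (lam Rr * (t + 2 * (IZR (Z.pos d) * PI) * Rr)) with (lam Rr * t + 2 * (IZR n * PI)).
      2:{ rewrite Hlam. fold w in Hq. rewrite <- Hq. field. lra. }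
      rewrite !cos_2kpi, !sin_2kpi. reflexivity.
Qed.
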